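(* Let $n\ge 3$ and let $\mathbf{x}$ be a fractional vertex of $P^n_{\mathrm{SEP}}$. Then $|E_{\mathbf{x}}|\ge n+3$.
   Context: $K_n=(V_n,E_n)$ is the complete undirected graph on $n$ nodes; $\delta(S)$ is the set of edges with exactly one endpoint in $S\subseteq V_n$. $P^n_{\mathrm{SEP}}=\{\mathbf{x}\in\mathbb{R}^{E_n} : \sum_{e\in\delta(v)}x_e=2\ \forall v;\ \sum_{e\in\delta(S)}x_e\ge 2\ \forall S \text{ with } 3\le|S|\le n-3;\ 0\le x_e\le 1\}$. A vertex is an extreme point of $P^n_{\mathrm{SEP}}$; it is fractional if it is not integral. $E_{\mathbf{x}}=\{e\in E_n: x_e>0\}$ is the edge set of the support graph of $\mathbf{x}$. *)

(* Defs.v *)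
From mathcomp Require Import all_boot all_order all_algebra.
From mathcomp Require Import reals.
Set Implicit Arguments. Unset Strict Implicit. Unset Printing Implicit Defensive.
Import Order.TTheory GRing.Theory Num.Theory.
Local Open Scope ring_scope.

Definition edge (n : nat) := {e : {set 'I_n} | #|e| == 2%N}.

Definition in_cut (n : nat) (S : {set 'I_n}) (e : edge n) : bool :=
  #|val e :&: S| == 1%N.

Definition cut_val (R : realType) (n : nat) (x : edge n -> R) (S : {set 'I_n}) : R :=
  \sum_(e : edge n | in_cut S e) x e.

Definition in_PSEP (R : realType) (n : nat) (x : edge n -> R) : Prop :=
  [/\ forall v : 'I_n, cut_val x [set v] = 2,
      forall S : {set 'I_n}, (3 <= #|S|)%N -> (#|S| <= n - 3)%N -> 2 <= cut_val x S
    & forall e : edge n, 0 <= x e <= 1].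

Definition is_vertex_PSEP (R : realType) (n : nat) (x : edge n -> R) : Prop :=
  in_PSEP x /\
  forall (y z : edge n -> R) (t : R), in_PSEP y -> in_PSEP z -> 0 < t < 1 ->
    (forall e, x e = t * y e + (1 - t) * z e) -> (forall e, y e = z e).

Definition fractional (R : realType) (n : nat) (x : edge n -> R) : Prop :=
  ~ (forall e : edge n, x e \is a Num.int).

Definition support_edges (R : realType) (n : nat) (x : edge n -> R) : {set edge n} :=
  [set e | 0 < x e].

(* Main.v *)
Require Import Defs.
From mathcomp Require Import all_boot all_order all_algebra.
From mathcomp Require Import reals.
From mathcomp Require Import ring lra zify.
Set Implicit Arguments. Unset Strict Implicit. Unset Printing Implicit Defensive.
Import Order.TTheory GRing.Theory Num.Theory.
Local Open Scope ring_scope.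

Section Aux.
Variable n : nat.

Lemma card_edge (e : edge n) : #|val e| = 2%N.
Proof. by apply/eqP; exact: (valP e). Qed.

Lemma card_pairI (a c : 'I_n) (S : {set 'I_n}) : a != c ->
  #|[set a; c] :&: S| = ((a \in S) + (c \in S))%N.
Proof.
move=> ac.
rewrite setIUl cardsU.
have E1 (u : 'I_n) : [set u] :&: S = if u \in S then [set u] else set0.
  by apply/setP=> w; case Hu: (u \in S); rewrite !inE; case: eqP => // ->; rewrite Hu.
rewrite !E1.
case: (a \in S); case: (c \in S); rewrite ?set0I ?setI0 ?cards0 ?cards1 //=.
suff -> : [set a] :&: [set c] = set0 by rewrite cards0.
apply/setP=> w; rewrite !inE; apply/negP=> /andP[/eqP-> /eqP ca]; by rewrite ca eqxx in ac.
Qed.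

Lemma in_cut1 (v : 'I_n) (e : edge n) : in_cut [set v] e = (v \in val e).
Proof.
rewrite /in_cut.
case: (boolP (v \in val e)) => H.
  have -> : val e :&: [set v] = [set v].
    by apply/setP=> w; rewrite !inE; case: (eqVneq w v) => [->|]; rewrite ?H ?andbT ?andbF.
  by rewrite cards1.
have -> : val e :&: [set v] = set0.
  by apply/setP=> w; rewrite !inE; case: (eqVneq w v) => [->|]; rewrite ?(negbTE H) ?andbT ?andbF.
by rewrite cards0.
Qed.

Lemma pair_eq (e : edge n) (u v : 'I_n) : u != v -> u \in val e -> v \in val e ->
  val e = [set u; v].
Proof.
move=> uv hu hv; apply/esym/eqP; rewrite eqEcard cards2 uv card_edge leqnn andbT.
by apply/subsetP=> w; rewrite !inE => /orP[]/eqP->.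
Qed.

Lemma L1n (g : edge n -> nat) (T : {set 'I_n}) :
  (\sum_(v in T) \sum_(e : edge n | v \in val e) g e = \sum_(e : edge n) g e * #|val e :&: T|)%N.
Proof.
rewrite (eq_bigr (fun v => \sum_(e : edge n) (if v \in val e then g e else 0%N))); last first.
  by move=> v _; rewrite big_mkcond.
rewrite exchange_big /=; apply: eq_bigr=> e _.
rewrite -big_mkcondr /= sum_nat_const mulnC; congr (_ * _)%N.
by apply: eq_card=> w; rewrite !inE andbC.
Qed.

Lemma L1r (R : realType) (g : edge n -> R) (T : {set 'I_n}) :
  \sum_(v in T) \sum_(e : edge n | v \in val e) g e = \sum_(e : edge n) g e *+ #|val e :&: T|.
Proof.
rewrite (eq_bigr (fun v => \sum_(e : edge n) (if v \in val e then g e else 0))); last first.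
  by move=> v _; rewrite big_mkcond.
rewrite exchange_big /=; apply: eq_bigr=> e _.
rewrite -big_mkcondr /= sumr_const; congr (_ *+ _).
by apply: eq_card=> w; rewrite !inE andbC.
Qed.

Lemma sum_ind (R : realType) (P : pred (edge n)) (e0 : edge n) :
  \sum_(e | P e) ((e == e0)%:R : R) = (P e0)%:R.
Proof.
rewrite big_mkcond (bigD1 e0) //= eqxx big1 ?addr0.
  by case: (P e0).
by move=> e /negbTE ->; case: (P e).
Qed.

End Aux.
Section Main.
Variable R : realType.
Variable n : nat.
Variable x : edge n -> R.
Hypothesis Px : in_PSEP x.

Lemma x_ge0 e : 0 <= x e.
Proof. by case: Px => _ _ /(_ e) /andP[]. Qed.
Lemma x_le1 e : x e <= 1.
Proof. by case: Px => _ _ /(_ e) /andP[]. Qed.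

Lemma deg2 v : \sum_(e : edge n | v \in val e) x e = 2.
Proof.
case: Px => /(_ v) H _ _; rewrite -H /cut_val.
by apply: eq_bigl => e; rewrite in_cut1.
Qed.

Definition isF (e : edge n) := (0 < x e) && (x e < 1).
Definition isO (e : edge n) := x e == 1.
Definition xf (e : edge n) := if isF e then x e else 0.
Definition one v := (\sum_(e : edge n | v \in val e) isO e)%N.
Definition fr v := (\sum_(e : edge n | v \in val e) isF e)%N.
Definition deg v := (\sum_(e : edge n | v \in val e) nat_of_bool (0 < x e)%R)%N.
Definition fs v := \sum_(e : edge n | v \in val e) xf e.
Definition W := [set v | (0 < fr v)%N].

Lemma x_split e : x e = (isO e)%:R + xf e.
Proof.
rewrite /isO /xf /isF; have := x_ge0 e; have := x_le1 e.
case: (eqVneq (x e) 1) => [->|ne1] /=; first by rewrite ltxx andbF addr0.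
move=> h1 h0; rewrite add0r.
have -> : x e < 1 by rewrite lt_neqAle ne1 h1.
by rewrite andbT; case: ifP => // /negbT; rewrite -leNgt => h; apply/eqP; rewrite eq_le h h0.
Qed.

Lemma deg_split e : nat_of_bool (0 < x e) = (isO e + isF e)%N.
Proof.
rewrite /isO /isF; have := x_ge0 e; have := x_le1 e.
case: (eqVneq (x e) 1) => [->|ne1] /=; first by rewrite ltr01 ltxx andbF.
move=> h1 h0.
have -> : x e < 1 by rewrite lt_neqAle ne1 h1.
by rewrite andbT.
Qed.

Lemma one_fs v : (one v)%:R + fs v = 2.
Proof.
rewrite -(deg2 v) /one /fs natr_sum -big_split /=.
by apply: eq_bigr => e _; rewrite -x_split.
Qed.

Lemma inW e v : isF e -> v \in val e -> v \in W.
Proof. by move=> hF hv; rewrite inE /fr (bigD1 e) //= hF. Qed.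

Lemma xf_ge0 e : 0 <= xf e.
Proof. by rewrite /xf; case: ifP => // _; exact: x_ge0. Qed.

Lemma fs_bounds v : v \in W -> 0 < fs v /\ fs v < (fr v)%:R.
Proof.
move=> vW.
case: (pickP [pred e : edge n | (v \in val e) && isF e]) => [e0 /andP[h1 h2] | H]; last first.
  move: vW; rewrite inE /fr big1 // => e he.
  by have := H e; rewrite /= he /= => ->.
rewrite /fs /fr natr_sum (bigD1 e0) //= (bigD1 e0 h1) /= /xf h2.
have s0 : 0 <= \sum_(i : edge n | (v \in val i) && (i != e0)) (if isF i then x i else 0).
  by apply: sumr_ge0 => i _; exact: xf_ge0.
have s1 : \sum_(i : edge n | (v \in val i) && (i != e0)) (if isF i then x i else 0)
          <= \sum_(i : edge n | (v \in val i) && (i != e0)) ((isF i)%:R : R).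
  apply: ler_sum => i _; case: ifP => hi; last by [].
  by rewrite /=; exact: x_le1.
have /andP[p1 p2] : (0 < x e0) && (x e0 < 1) := h2.
rewrite /=; split; lra.
Qed.

Lemma W_facts v : v \in W ->
  [/\ (one v <= 1)%N, (2 <= fr v)%N & (one v = 0%N -> 3 <= fr v)%N].
Proof.
move=> vW; have h := one_fs v; case: (fs_bounds vW) => h1 h2.
have o2 : (one v < 2)%N by rewrite -(ltr_nat R); lra.
have [o0|o1] : one v = 0%N \/ one v = 1%N by lia.
  rewrite o0 in h; have : (2%:R : R) < (fr v)%:R by lra.
  rewrite ltr_nat => h3; split; lia.
rewrite o1 in h; have : (1%:R : R) < (fr v)%:R by lra.
rewrite ltr_nat => h3; split; lia.
Qed.

Lemma notW v : v \notin W -> one v = 2%N.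
Proof.
move=> vW; have h := one_fs v.
have : fs v = 0.
  rewrite /fs big1 // => e he; rewrite /xf; case: ifP => // hF.
  by have := inW hF he; rewrite (negbTE vW).
move=> h0; rewrite h0 addr0 in h; apply/eqP; rewrite -(eqr_nat R) h //.
Qed.

Lemma fs_notW v : v \notin W -> fs v = 0.
Proof. by move=> vW; have := one_fs v; rewrite notW //; lra. Qed.

Lemma deg_ge2 v : (2 <= deg v)%N.
Proof.
rewrite -(ler_nat R) /deg natr_sum.
have -> : (2%:R : R) = 2 by [].
rewrite -(deg2 v); apply: ler_sum => e _.
case: (ltrP 0 (x e)) => h /=; first exact: x_le1.
done.
Qed.

Lemma deg_eq v : deg v = (one v + fr v)%N.
Proof. by rewrite /deg /one /fr -big_split; apply: eq_bigr => e _; rewrite deg_split. Qed.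

Lemma deg_W v : v \in W -> (3 <= deg v)%N.
Proof. by move=> /W_facts [h1 h2 h3]; rewrite deg_eq; lia. Qed.


Lemma sum_boolE (T : finType) (P : pred T) : (\sum_(i : T) nat_of_bool (P i))%N = #|P|.
Proof. rewrite -sum1_card [in RHS]big_mkcond /=; apply: eq_bigr => i _; by rewrite unfold_in; case: (P i). Qed.

Lemma handshake : (\sum_(v : 'I_n) deg v = 2 * #|support_edges x|)%N.
Proof.
have -> : (\sum_(v : 'I_n) deg v = \sum_(v in [set: 'I_n]) deg v)%N.
  by apply: eq_bigl => v; rewrite in_setT.
rewrite /deg L1n.
rewrite (eq_bigr (fun e => nat_of_bool (0 < x e)%R * 2)%N); last first.
  by move=> e _; rewrite setIT card_edge.
rewrite -big_distrl /= sum_boolE mulnC; congr (_ * _)%N.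
by apply: eq_card => e; rewrite /support_edges inE.
Qed.

Lemma sum_one_even : exists k, (\sum_(v in W) one v = 2 * k)%N.
Proof.
have h1 : (\sum_(v in [set: 'I_n]) one v = (\sum_(e : edge n) nat_of_bool (isO e)) * 2)%N.
  rewrite /one L1n big_distrl /=; apply: eq_bigr => e _; by rewrite setIT card_edge.
have h2 : (\sum_(v in [set: 'I_n]) one v = \sum_(v in W) one v + \sum_(v in ~: W) one v)%N.
  rewrite (bigID (mem W)) /=; congr (_ + _)%N; apply: eq_bigl => v; by rewrite !inE.
have h3 : (\sum_(v in ~: W) one v = 2 * \sum_(v in ~: W) 1)%N.
  rewrite big_distrr /=; apply: eq_bigr => v; rewrite inE => /notW ->; done.
exists ((\sum_(e : edge n) nat_of_bool (isO e)) - \sum_(v in ~: W) 1)%N; lia.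
Qed.

Lemma W_le4 : (#|support_edges x| <= n + 2)%N -> (#|W| <= 4)%N.
Proof.
move=> hm.
have h : (\sum_(v : 'I_n) (2 + nat_of_bool (v \in W)) <= \sum_(v : 'I_n) deg v)%N.
  apply: leq_sum => v _; case: (boolP (v \in W)) => hv /=.
    by rewrite addn1; exact: deg_W.
  by rewrite addn0; exact: deg_ge2.
move: h; rewrite handshake big_split /= sum_boolE big_const card_ord iter_addn_0.
move=> h2; have h3 : (2 * #|support_edges x| <= 2 * (n + 2))%N by rewrite leq_mul2l hm orbT.
by have := leq_trans h2 h3; rewrite mulnDr leq_add2l.
Qed.

Definition oth v (e : edge n) := odflt v [pick u in (val e : {set 'I_n}) :\ v].

Lemma oth_spec v (e : edge n) : v \in val e ->
  [/\ oth v e \in val e, oth v e != v & val e = [set v; oth v e]].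
Proof.
move=> hv; rewrite /oth; case: pickP => [u | H] /=.
  rewrite !inE => /andP[uv ue]; split => //; apply: pair_eq => //; by rewrite eq_sym.
exfalso.
have h0 : #|val e :\ v| = 0%N by apply: eq_card0 => u; rewrite H.
by have := cardsD1 v (val e); rewrite hv card_edge h0.
Qed.

Lemma oth_inj v : {in [set e : edge n | (v \in val e) && isF e] &, injective (oth v)}.
Proof.
move=> e1 e2; rewrite !inE => /andP[h1 _] /andP[h2 _] eq.
apply: val_inj; case: (oth_spec h1) => _ _ ->; case: (oth_spec h2) => _ _ ->.
by rewrite eq.
Qed.

Lemma frE v : fr v = #|[set e : edge n | (v \in val e) && isF e]|.
Proof.
rewrite /fr big_mkcond /=.
rewrite (eq_bigr (fun e : edge n => nat_of_bool ((v \in val e) && isF e))); last first.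
  by move=> e _; case: (v \in val e).
rewrite sum_boolE; apply: eq_card => e; by rewrite inE.
Qed.

Lemma fr_le v : (fr v <= #|W :\ v|)%N.
Proof.
rewrite frE -(card_in_imset (@oth_inj v)); apply: subset_leq_card.
apply/subsetP => u /imsetP[e he ->]; rewrite inE in he; case/andP: he => h1 h2.
case: (oth_spec h1) => o1 o2 _; rewrite in_setD1 o2 /=; exact: (inW h2 o1).
Qed.

Lemma nbr_full v (T : {set 'I_n}) :
  (forall e : edge n, v \in val e -> isF e -> oth v e \in T) -> (#|T| <= fr v)%N ->
  forall u, u \in T -> exists e : edge n, isF e /\ val e = [set v; u].
Proof.
move=> hT hc u uT.
have sub : oth v @: [set e : edge n | (v \in val e) && isF e] \subset T.
  by apply/subsetP => w /imsetP[e]; rewrite inE => /andP[h1 h2] ->; exact: hT.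
have eq : oth v @: [set e : edge n | (v \in val e) && isF e] = T.
  by apply/eqP; rewrite eqEcard sub /= (card_in_imset (@oth_inj v)) -frE.
move: uT; rewrite -eq => /imsetP[e]; rewrite inE => /andP[h1 h2] ->.
by exists e; split => //; case: (oth_spec h1).
Qed.

Lemma card_eI2 (e : edge n) S : (#|val e :&: S| <= 2)%N.
Proof. by have := subset_leq_card (subsetIl (val e) S); rewrite card_edge. Qed.

Lemma cut_bound u v (euv : edge n) (S : {set 'I_n}) :
  u != v -> val euv = [set u; v] -> isF euv -> u \in S -> v \in S ->
  (forall w, w \in S -> w \in W -> (w == u) || (w == v)) ->
  (3 <= #|S|)%N -> (#|S| <= n - 3)%N ->
  4 - 2 * x euv <= cut_val x S.
Proof.
move=> uv hE hF uS vS hSW h3 h4.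
have feas : 2 <= cut_val x S by case: Px => _ /(_ S h3 h4).
have uW : u \in W by apply: (inW hF); rewrite hE !inE eqxx.
have vW : v \in W by apply: (inW hF); rewrite hE !inE eqxx orbT.
set c1 := (\sum_(e : edge n | in_cut S e) nat_of_bool (isO e))%N.
have hcut : cut_val x S = c1%:R + \sum_(e : edge n | in_cut S e) xf e.
  rewrite /cut_val /c1 natr_sum -big_split /=; apply: eq_bigr => e _; exact: x_split.
have hSWe : forall w, ((w \in S) && (w \in W)) = (w \in [set u; v]).
  move=> w; rewrite in_set2; apply/idP/idP.
    by case/andP => h1 h2; exact: hSW.
  by case/orP => /eqP ->; rewrite ?uS ?vS ?uW ?vW.
have uv' : u \notin [set v] by rewrite inE.
have hF2 : \sum_(w in S) fs w = \sum_(e : edge n | in_cut S e) xf e + 2 * x euv.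
  rewrite /fs L1r.
  rewrite (eq_bigr (fun e : edge n => (if in_cut S e then xf e else 0)
                     + (if #|val e :&: S| == 2%N then 2 * xf e else 0))); last first.
    move=> e _; rewrite /in_cut; have := card_eI2 e S.
    case: #|val e :&: S| => [|[|[|k]]] //= _.
    - by rewrite mulr0n addr0.
    - by rewrite mulr1n addr0.
    - by rewrite mulr2n add0r; lra.
  rewrite big_split /= -big_mkcond /=; congr (_ + _).
  rewrite -big_mkcond /= (bigD1 euv) /=; last by rewrite hE card_pairI // uS vS.
  rewrite big1 ?addr0 /xf ?hF //.
  move=> e /andP[h2 ne]; rewrite /xf; case: ifP => hFe; last by rewrite mulr0.
  exfalso.
  have sub : val e \subset S.
    apply/setIidPl/eqP; rewrite eqEcard subsetIl card_edge (eqP h2) //.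
  have h : val e = [set u; v].
    apply/eqP; rewrite eqEcard card_edge cards2 uv andbT; apply/subsetP => w hw.
    by rewrite -hSWe (subsetP sub w hw) (inW hFe hw).
  by move/eqP: ne; apply; apply: val_inj; rewrite h hE.
have hfs : \sum_(w in S) fs w = fs u + fs v.
  rewrite (bigID (mem W)) /= [X in _ + X]big1; last first.
    by move=> w /andP[_ hw]; exact: fs_notW.
  rewrite addr0 (eq_bigl (mem [set u; v])); last by move=> w; rewrite /= hSWe.
  by rewrite big_setU1 //= big_set1.
have hO : exists k j, (one u + one v + 2 * k = c1 + 2 * j)%N.
  have e1 : (\sum_(w in S) one w = \sum_(e : edge n) nat_of_bool (isO e) * #|val e :&: S|)%N.
    exact: L1n.
  have e2 : (\sum_(w in S) one w = one u + one v + 2 * \sum_(w in S | w \notin W) 1)%N.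
    rewrite (bigID (mem W)) /= big_distrr /=; congr (_ + _)%N; last first.
      by apply: eq_bigr => w /andP[_ hw]; rewrite notW.
    rewrite (eq_bigl (mem [set u; v])); last by move=> w; rewrite /= hSWe.
    by rewrite big_setU1 //= big_set1.
  have e3 : (\sum_(e : edge n) nat_of_bool (isO e) * #|val e :&: S|
             = c1 + 2 * \sum_(e : edge n) (nat_of_bool (isO e) * (#|val e :&: S| == 2%N)))%N.
    rewrite /c1 big_distrr [in RHS]big_mkcond -big_split /=; apply: eq_bigr => ed _.
    rewrite /in_cut; have := card_eI2 ed S.
    case: #|val ed :&: S| => [|[|[|k]]] //= _; case: (isO ed) => //.
  exists (\sum_(w in S | w \notin W) 1)%N, (\sum_(e : edge n) (nat_of_bool (isO e) * (#|val e :&: S| == 2%N)))%N.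
  by rewrite -e2 e1 e3.
have fsu := one_fs u; have fsv := one_fs v.
have hx : 0 < x euv by case/andP: hF.
case: (W_facts uW) => ou _ _; case: (W_facts vW) => ov _ _.
rewrite hfs in hF2; rewrite hcut.
case: (leqP (one u + one v) c1) => hc.
  have : ((one u + one v)%N%:R : R) <= c1%:R by rewrite ler_nat.
  rewrite natrD; lra.
have [c0 s2] : c1 = 0%N /\ (one u + one v = 2)%N by case: hO => k [j]; lia.
exfalso.
have : ((one u + one v)%N%:R : R) = 2%:R by rewrite s2.
rewrite natrD => hs.
move: feas; rewrite hcut c0 /=; lra.
Qed.

Definition dd (eac ead ebc ebd : edge n) (e : edge n) : R :=
  (e == eac)%:R - (e == ead)%:R - (e == ebc)%:R + (e == ebd)%:R.

Lemma incut_pair S (e : edge n) p q : p != q -> val e = [set p; q] ->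
  in_cut S e = ((p \in S) != (q \in S)).
Proof. by move=> pq he; rewrite /in_cut he card_pairI //; case: (p \in S); case: (q \in S). Qed.

Lemma edge_neq (e1 e2 : edge n) w : w \in val e1 -> w \notin val e2 -> e1 != e2.
Proof. by move=> h1 h2; apply: contraNneq h2 => <-. Qed.

Lemma b1 : (nat_of_bool true)%:R = (1 : R). Proof. by []. Qed.
Lemma b0 : (nat_of_bool false)%:R = (0 : R). Proof. by []. Qed.

Lemma key_cases (A B C D : bool) (cx eps xac xbd : R) :
  0 < eps -> eps <= 1 - xac -> eps <= 1 - xbd -> 2 <= cx ->
  (A -> C -> ~~ B -> ~~ D -> 4 - 2 * xac <= cx) ->
  (B -> D -> ~~ A -> ~~ C -> 4 - 2 * xbd <= cx) ->
  2 <= cx + eps * ((A != C)%:R - (A != D)%:R - (B != C)%:R + (B != D)%:R).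
Proof.
move=> h0 ha hb f.
case: A; case: B; case: C; case: D => /= h1 h2;
try (have h3 := h1 isT isT isT isT); try (have h4 := h2 isT isT isT isT); lra.
Qed.

Lemma pert a b c d eac ead ebc ebd eps :
  a != b -> a != c -> a != d -> b != c -> b != d -> c != d ->
  val eac = [set a; c] -> val ead = [set a; d] -> val ebc = [set b; c] -> val ebd = [set b; d] ->
  isF eac -> isF ead -> isF ebc -> isF ebd ->
  (forall w, w \in W -> [|| w == a, w == b, w == c | w == d]) ->
  0 < eps -> eps <= x eac -> eps <= 1 - x eac -> eps <= x ead -> eps <= 1 - x ead ->
  eps <= x ebc -> eps <= 1 - x ebc -> eps <= x ebd -> eps <= 1 - x ebd ->
  in_PSEP (fun e => x e + eps * dd eac ead ebc ebd e).
Proof.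
move=> ab ac ad bc bd cd hac had hbc hbd Fac Fad Fbc Fbd hW e0 e1 e2 e3 e4 e5 e6 e7 e8.
have ba : b != a by rewrite eq_sym.
have ca : c != a by rewrite eq_sym.
have da : d != a by rewrite eq_sym.
have cb : c != b by rewrite eq_sym.
have db : d != b by rewrite eq_sym.
have dc : d != c by rewrite eq_sym.
have cutlin S : cut_val (fun e => x e + eps * dd eac ead ebc ebd e) S =
   cut_val x S + eps * ((in_cut S eac)%:R - (in_cut S ead)%:R - (in_cut S ebc)%:R + (in_cut S ebd)%:R).
  rewrite /cut_val big_split /= -mulr_sumr; congr (_ + _ * _).
  by rewrite /dd big_split !sumrB !sum_ind.
have hAC S := incut_pair S ac hac.
have hAD S := incut_pair S ad had.
have hBC S := incut_pair S bc hbc.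
have hBD S := incut_pair S bd hbd.
split.
- move=> v; rewrite cutlin hAC hAD hBC hBD; case: Px => /(_ v) -> _ _.
  rewrite !inE.
  case: (eqVneq v a) => [hv|nav].
    by subst v; rewrite ?eqxx ?(negbTE ba) ?(negbTE ca) ?(negbTE da) /=; lra.
  case: (eqVneq v b) => [hv|nbv].
    by subst v; rewrite ?eqxx ?(negbTE ab) ?(negbTE cb) ?(negbTE db) /=; lra.
  case: (eqVneq v c) => [hv|ncv].
    by subst v; rewrite ?eqxx ?(negbTE ac) ?(negbTE bc) ?(negbTE dc) /=; lra.
  case: (eqVneq v d) => [hv|ndv].
    by subst v; rewrite ?eqxx ?(negbTE ad) ?(negbTE bd) ?(negbTE cd) /=; lra.
  by rewrite /=; lra.
- move=> S h3 h4; rewrite cutlin hAC hAD hBC hBD.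
  have feas : 2 <= cut_val x S by case: Px => _ /(_ S h3 h4).
  have k1 : a \in S -> c \in S -> b \notin S -> d \notin S -> 4 - 2 * x eac <= cut_val x S.
    move=> aS cS bS dS; apply: (cut_bound ac hac Fac aS cS _ h3 h4).
    move=> w wS wW; case/or4P: (hW w wW) => /eqP hw; subst w.
    + by rewrite eqxx.
    + by rewrite wS in bS.
    + by rewrite eqxx orbT.
    + by rewrite wS in dS.
  have k2 : b \in S -> d \in S -> a \notin S -> c \notin S -> 4 - 2 * x ebd <= cut_val x S.
    move=> bS dS aS cS; apply: (cut_bound bd hbd Fbd bS dS _ h3 h4).
    move=> w wS wW; case/or4P: (hW w wW) => /eqP hw; subst w.
    + by rewrite wS in aS.
    + by rewrite eqxx.
    + by rewrite wS in cS.
    + by rewrite eqxx orbT.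
  exact: (key_cases e0 e2 e8 feas k1 k2).
- move=> e.
  have nACAD : (eac == ead) = false.
    apply/negbTE; apply: (@edge_neq _ _ c); first by rewrite hac in_set2 eqxx orbT.
    by rewrite had in_set2 negb_or ca cd.
  have nACBC : (eac == ebc) = false.
    apply/negbTE; apply: (@edge_neq _ _ a); first by rewrite hac in_set2 eqxx.
    by rewrite hbc in_set2 negb_or ab ac.
  have nACBD : (eac == ebd) = false.
    apply/negbTE; apply: (@edge_neq _ _ a); first by rewrite hac in_set2 eqxx.
    by rewrite hbd in_set2 negb_or ab ad.
  have nADBC : (ead == ebc) = false.
    apply/negbTE; apply: (@edge_neq _ _ a); first by rewrite had in_set2 eqxx.
    by rewrite hbc in_set2 negb_or ab ac.
  have nADBD : (ead == ebd) = false.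
    apply/negbTE; apply: (@edge_neq _ _ a); first by rewrite had in_set2 eqxx.
    by rewrite hbd in_set2 negb_or ab ad.
  have nBCBD : (ebc == ebd) = false.
    apply/negbTE; apply: (@edge_neq _ _ c); first by rewrite hbc in_set2 eqxx orbT.
    by rewrite hbd in_set2 negb_or cb cd.
  have := x_ge0 e; have := x_le1 e.
  rewrite /dd; case: (eqVneq e eac) => [->|n1].
    by rewrite ?eqxx ?nACAD ?nACBC ?nACBD ?b1 ?b0; lra.
  case: (eqVneq e ead) => [->|n2].
    by rewrite ?eqxx ?nADBC ?nADBD ?b1 ?b0; lra.
  case: (eqVneq e ebc) => [->|n3].
    by rewrite ?eqxx ?nBCBD ?b1 ?b0; lra.
  case: (eqVneq e ebd) => [->|n4].
    by rewrite ?eqxx ?b1 ?b0; lra.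
  by rewrite ?b1 ?b0; lra.
Qed.

Lemma finish (a b : 'I_n) : #|W| = 4%N -> a \in W -> b \in W -> a != b ->
  (forall u, u \in W :\ a :\ b ->
     (exists e : edge n, isF e /\ val e = [set a; u]) /\
     (exists e : edge n, isF e /\ val e = [set b; u])) ->
  is_vertex_PSEP x -> False.
Proof.
move=> h4 aW bW ab hadj [_ hv].
have hT : #|W :\ a :\ b| = 2%N.
  have ba : b != a by rewrite eq_sym.
  have := cardsD1 a W; have := cardsD1 b (W :\ a).
  rewrite aW in_setD1 ba bW /= h4 => ->; rewrite !add1n; by case.
have /cards2P [c [d [cd hTe]]] : #|W :\ a :\ b| == 2%N by rewrite hT.
have cT : c \in W :\ a :\ b by rewrite hTe !inE eqxx.
have dT : d \in W :\ a :\ b by rewrite hTe !inE eqxx orbT.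
move: (cT) (dT); rewrite !in_setD1 => /and3P[cb ca cW] /and3P[db da dW].
have ac : a != c by rewrite eq_sym.
have ad : a != d by rewrite eq_sym.
have bc : b != c by rewrite eq_sym.
have bd : b != d by rewrite eq_sym.
have hW : forall w, w \in W -> [|| w == a, w == b, w == c | w == d].
  move=> w wW; case: (eqVneq w a) => //= wa; case: (eqVneq w b) => //= wb.
  have : w \in W :\ a :\ b by rewrite !in_setD1 wa wb wW.
  by rewrite hTe in_set2.
case: (hadj c cT) => [[eac [Fac hac]] [ebc [Fbc hbc]]].
case: (hadj d dT) => [[ead [Fad had]] [ebd [Fbd hbd]]].
set eps := Num.min (Num.min (Num.min (x eac) (1 - x eac)) (Num.min (x ead) (1 - x ead)))
                   (Num.min (Num.min (x ebc) (1 - x ebc)) (Num.min (x ebd) (1 - x ebd))).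
have pos : forall e, isF e -> 0 < x e /\ 0 < 1 - x e.
  by move=> e /andP[h1 h2]; split => //; rewrite subr_gt0.
have e0 : 0 < eps.
  case: (pos _ Fac) => p1 p2; case: (pos _ Fad) => p3 p4.
  case: (pos _ Fbc) => p5 p6; case: (pos _ Fbd) => p7 p8.
  by rewrite /eps !lt_min p1 p2 p3 p4 p5 p6 p7 p8.
have : eps <= eps by [].
rewrite {2}/eps !le_min => /andP[/andP[/andP[g1 g2] /andP[g3 g4]] /andP[/andP[g5 g6] /andP[g7 g8]]].
have hy := pert ab ac ad bc bd cd hac had hbc hbd Fac Fad Fbc Fbd hW e0 g1 g2 g3 g4 g5 g6 g7 g8.
have hW' : forall w, w \in W -> [|| w == a, w == b, w == d | w == c].
  by move=> w /hW /or4P[] ->; rewrite ?orbT.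
have dc : d != c by rewrite eq_sym.
have hz := pert ab ad ac bd bc dc had hac hbd hbc Fad Fac Fbd Fbc hW' e0 g3 g4 g1 g2 g7 g8 g5 g6.
have ht : 0 < (1 / 2 : R) < 1 by apply/andP; split; lra.
have hddn e : dd ead eac ebd ebc e = - dd eac ead ebc ebd e by rewrite /dd; ring.
have hx : forall e, x e = 1 / 2 * (x e + eps * dd eac ead ebc ebd e)
                          + (1 - 1 / 2) * (x e + eps * dd ead eac ebd ebc e).
  by move=> e; rewrite hddn; field.
have := hv _ _ _ hy hz ht hx eac.
have nACAD : (eac == ead) = false.
  apply/negbTE; apply: (@edge_neq _ _ c); first by rewrite hac in_set2 eqxx orbT.
  by rewrite had in_set2 negb_or eq_sym ac eq_sym dc.
have nACBC : (eac == ebc) = false.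
  apply/negbTE; apply: (@edge_neq _ _ a); first by rewrite hac in_set2 eqxx.
  by rewrite hbc in_set2 negb_or ab ac.
have nACBD : (eac == ebd) = false.
  apply/negbTE; apply: (@edge_neq _ _ a); first by rewrite hac in_set2 eqxx.
  by rewrite hbd in_set2 negb_or ab ad.
rewrite hddn /dd eqxx nACAD nACBC nACBD b1 b0.
lra.
Qed.

Definition adjb (p q : 'I_n) := [exists e : edge n, isF e && (val e == [set p; q])].

Lemma main_contra : is_vertex_PSEP x -> fractional x ->
  (#|support_edges x| <= n + 2)%N -> False.
Proof.
move=> hv hfrac hm.
have [e0 He0] : exists e0, isF e0.
  case: (pickP isF) => [e0 h | H]; first by exists e0.
  exfalso; apply: hfrac => e; have := H e; rewrite /isF.
  have := x_ge0 e; have := x_le1 e.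
  case: (ltrP 0 (x e)) => h0 h1 h2 /=.
    move=> hlt; have -> : x e = 1.
      by apply/eqP; rewrite eq_le h1 /= leNgt hlt.
    exact: int_num1.
  have -> : x e = 0 by apply/eqP; rewrite eq_le h0 h2.
  by move=> _; exact: int_num0.
have [a ha] : exists a, a \in val e0.
  by apply/card_gt0P; rewrite card_edge.
have aW := inW He0 ha.
have hW4 := W_le4 hm.
have hW3 : (3 <= #|W|)%N.
  case: (W_facts aW) => _ f2 _; have := fr_le a; have := cardsD1 a W.
  rewrite aW; lia.
have [h3 | h4] : #|W| = 3%N \/ #|W| = 4%N by lia.
  have hone : forall v, v \in W -> one v = 1%N.
    move=> v vW; case: (W_facts vW) => o1 f2 f3; have := fr_le v.
    have := cardsD1 v W; rewrite vW h3 => hc.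
    case: (eqVneq (one v) 0%N) => [/f3|]; lia.
  have [k hk] := sum_one_even.
  rewrite (eq_bigr (fun _ => 1%N)) in hk; last by move=> v; exact: hone.
  rewrite sum1_card h3 in hk; lia.
have pairs : forall p, p \in W -> exists q, q \in W :\ p.
  move=> p pW; apply/card_gt0P; have := cardsD1 p W; rewrite pW h4; lia.
case: (boolP [exists p : 'I_n, exists q : 'I_n,
                [&& p \in W, q \in W, p != q & ~~ adjb p q]]).
  move=> /existsP [p /existsP [q /and4P [pW qW pq npq]]].
  apply: (finish h4 pW qW pq _ hv).
  have hT : #|W :\ p :\ q| = 2%N.
    have qp : q != p by rewrite eq_sym.
    have := cardsD1 p W; have := cardsD1 q (W :\ p).
    rewrite pW in_setD1 qp qW /= h4 => ->; rewrite !add1n; by case.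
  have side : forall (s t : 'I_n), s \in W -> s != t -> ~~ adjb s t ->
      (#|W :\ p :\ q| <= fr s)%N ->
      (forall e : edge n, s \in val e -> isF e -> oth s e != t) ->
      (forall e : edge n, s \in val e -> isF e -> oth s e \in W :\ p :\ q) ->
      forall u, u \in W :\ p :\ q -> exists e : edge n, isF e /\ val e = [set s; u].
    by move=> s t _ _ _ hc _ hin; exact: nbr_full hin hc.
  have notadj : forall (s t : 'I_n) (e : edge n), ~~ adjb s t -> s \in val e -> isF e ->
      oth s e != t.
    move=> s t e hn hs hF; apply/eqP => ht; move/negP: hn; apply.
    apply/existsP; exists e; rewrite hF /=; case: (oth_spec hs) => _ _ ->.
    by rewrite ht.
  have symadj : ~~ adjb q p.
    apply/negP => /existsP [e /andP [hF he]]; move/negP: npq; apply.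
    by apply/existsP; exists e; rewrite hF /= (eqP he) setUC.
  have inT : forall (s : 'I_n) (e : edge n), (s == p) || (s == q) -> s \in val e -> isF e ->
      ~~ adjb p q -> ~~ adjb q p -> oth s e \in W :\ p :\ q.
    move=> s e hs hse hF n1 n2; case: (oth_spec hse) => o1 o2 _.
    rewrite !in_setD1 (inW hF o1) andbT.
    case/orP: hs => /eqP hs; subst s.
      by rewrite o2 (notadj _ _ _ n1 hse hF).
    by rewrite o2 (notadj _ _ _ n2 hse hF).
  move=> u uT; split.
    apply: (nbr_full _ _ uT).
      by move=> e he hF; apply: inT => //; rewrite eqxx.
    by case: (W_facts pW) => _ f2 _; rewrite hT.
  apply: (nbr_full _ _ uT).
    by move=> e he hF; apply: inT => //; rewrite eqxx orbT.
  by case: (W_facts qW) => _ f2 _; rewrite hT.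
move=> hall.
have [b hb] := pairs a aW.
move: (hb); rewrite in_setD1 => /andP [ba bW].
have ab : a != b by rewrite eq_sym.
apply: (finish h4 aW bW ab _ hv).
have adjall : forall s t, s \in W -> t \in W -> s != t -> exists e : edge n, isF e /\ val e = [set s; t].
  move=> s t sW tW st.
  have : adjb s t.
    apply: contraNT hall => hn; apply/existsP; exists s; apply/existsP; exists t.
    by rewrite sW tW st hn.
  by move=> /existsP [e /andP [hF /eqP he]]; exists e.
move=> u; rewrite !in_setD1 => /and3P [ub ua uW]; split.
  by apply: adjall => //; rewrite eq_sym.
by apply: adjall => //; rewrite eq_sym.
Qed.

End Main.

Theorem mainTheorem2 (R : realType) (n : nat) (x : edge n -> R) :
  (3 <= n)%N -> is_vertex_PSEP x -> fractional x ->
  (n + 3 <= #|support_edges x|)%N.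
Proof.
move=> _ hv hf; rewrite leqNgt; apply/negP => h.
have Px : in_PSEP x := hv.1.
apply: (main_contra Px hv hf); lia.
Qed.
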